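(* Let $\tau$ be a pure parabolic isometry of $\mathbb{H}^4$ with fixed point $v\in\widehat{\mathbb{R}^3}$. Then a circle $c$ in $\widehat{\mathbb{R}^3}$ satisfies $v\in c\subset h$ for some $h\in\mathcal{F}_\tau$ if and only if $c\in\mathcal{K}_\tau$.
   Context: Identify $\partial\mathbb{H}^4$ with $\widehat{\mathbb{R}^3}=\mathbb{R}^3\cup\{\infty\}$; circles include Euclidean lines with $\infty$ added. A pure parabolic isometry is a composition of reflections in two hyperplanes tangent at a unique point at infinity. After conjugation by a Möbius map $\phi$ sending $v$ to $\infty$, its boundary action is $x\mapsto x+b$ with $b\neq0$. The permuted pencil $\mathcal{F}_\tau$ is the image under $\phi^{-1}$ of the set of Euclidean planes orthogonal to $b$ (with $\infty$ added). The invariant pencil $\mathcal{T}_\tau$ is the image under $\phi^{-1}$ of the set of Euclidean planes parallel to $b$ (with $\infty$ added). The half-turn bank is $\mathcal{K}_\tau=\{s\cap t: s\in\mathcal{F}_\tau,\ t\in\mathcal{T}_\tau\}$. *)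

(* Defs.v *)
From HB Require Import structures.
From mathcomp Require Import all_boot all_order all_algebra.
From mathcomp Require Import boolp classical_sets reals.

Set Implicit Arguments.
Unset Strict Implicit.
Unset Printing Implicit Defensive.

Import Order.TTheory GRing.Theory Num.Theory.
Local Open Scope ring_scope.
Local Open Scope classical_set_scope.

Section Defs.
Variable R : realType.

Definition vec := 'rV[R]_3.
Definition dotv (u w : vec) : R := (u *m w^T) 0 0.
Definition sqnorm (u : vec) : R := dotv u u.

Inductive ext := Fin of vec | Infty.

(* Generalized spheres of \hat{R^3} (= boundaries of hyperplanes of H^4):
   Euclidean spheres with centre c and squared radius r2 > 0, and
   Euclidean planes {x | a . x = d} (a <> 0) with oo added. *)
Inductive gsphere := GSph of vec & R | GPln of vec & R.

Definition gsphere_valid (S : gsphere) : Prop :=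
  match S with
  | GSph _ r2 => 0 < r2
  | GPln a _ => a <> 0
  end.

Definition gsphere_set (S : gsphere) : set ext :=
  match S with
  | GSph c r2 => [set y | exists x, y = Fin x /\ sqnorm (x - c) = r2]
  | GPln a d => [set y | y = Infty \/ exists x, y = Fin x /\ dotv a x = d]
  end.

(* Boundary action of the reflection of H^4 in the hyperplane bounded by S:
   inversion in a sphere, Euclidean reflection in a plane (fixing oo). *)
Definition gsphere_refl (S : gsphere) (y : ext) : ext :=
  match S with
  | GSph c r2 =>
      match y with
      | Infty => Fin c
      | Fin x => if x == c then Infty
                 else Fin (c + (r2 / sqnorm (x - c)) *: (x - c))
      end
  | GPln a d =>
      match y with
      | Infty => Infty
      | Fin x => Fin (x - ((2 * (dotv a x - d)) / sqnorm a) *: a)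
      end
  end.

Inductive mobius : (ext -> ext) -> Prop :=
  | mobius_id : mobius id
  | mobius_comp (S : gsphere) (f : ext -> ext) :
      gsphere_valid S -> mobius f -> mobius (gsphere_refl S \o f).

(* Pure parabolic isometry (boundary action): the composition of the
   reflections in two hyperplanes tangent at a unique point at infinity,
   i.e. two distinct generalized spheres meeting in exactly one point. *)
Definition pure_parabolic (tau : ext -> ext) : Prop :=
  exists S1 S2 : gsphere,
    [/\ gsphere_valid S1, gsphere_valid S2,
        gsphere_set S1 <> gsphere_set S2,
        (exists p, gsphere_set S1 `&` gsphere_set S2 = [set p]) &
        tau = gsphere_refl S1 \o gsphere_refl S2].

(* Circles of \hat{R^3}: Euclidean circles (centre p, plane normal n,
   squared radius r2 > 0) and Euclidean lines with oo added. *)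
Definition is_circle (C : set ext) : Prop :=
  (exists (p n : vec) (r2 : R), n <> 0 /\ 0 < r2 /\
     C = [set y | exists x, y = Fin x /\ dotv (x - p) n = 0
                                     /\ sqnorm (x - p) = r2])
  \/ (exists p d : vec, d <> 0 /\
     C = [set y | y = Infty \/ exists t : R, y = Fin (p + t *: d)]).

Definition ext_plane (a : vec) (d : R) : set ext :=
  [set y | y = Infty \/ exists x, y = Fin x /\ dotv a x = d].

(* Given phi (Moebius, sending the fixed point v to oo) and the translation
   vector b of phi o tau o phi^-1, the permuted pencil, the invariant
   pencil and the half-turn bank.  The image of a set under phi^-1 is its
   preimage under phi. *)
Definition permuted_pencil (phi : ext -> ext) (b : vec) : set (set ext) :=
  [set h | exists d : R, h = phi @^-1` ext_plane b d].

Definition invariant_pencil (phi : ext -> ext) (b : vec) : set (set ext) :=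
  [set h | exists (a : vec) (d : R),
      a <> 0 /\ dotv a b = 0 /\ h = phi @^-1` ext_plane a d].

Definition half_turn_bank (phi : ext -> ext) (b : vec) : set (set ext) :=
  [set k | exists s t, permuted_pencil phi b s /\ invariant_pencil phi b t
                       /\ k = s `&` t].

Definition ext_transl (b : vec) (y : ext) : ext :=
  match y with Fin x => Fin (x + b) | Infty => Infty end.

End Defs.

(* Main.v *)
Require Import Defs.
From HB Require Import structures.
From mathcomp Require Import all_boot all_order all_algebra.
From mathcomp Require Import boolp classical_sets reals.
From mathcomp Require Import ring lra.
Import Order.TTheory GRing.Theory Num.Theory.
Local Open Scope ring_scope.
Local Open Scope classical_set_scope.
Section S.
Variable R : realType.
Definition i0 : 'I_3 := @Ordinal 3 0 isT.
Definition i1 : 'I_3 := @Ordinal 3 1 isT.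
Definition i2 : 'I_3 := @Ordinal 3 2 isT.
Lemma dotvE (u w : vec R) : dotv u w = u 0 i0 * w 0 i0 + u 0 i1 * w 0 i1 + u 0 i2 * w 0 i2.
Proof.
rewrite /dotv mxE !big_ord_recl big_ord0 !mxE addr0 addrA.
have -> : lift ord0 ord0 = i1 :> 'I_3 by apply/val_inj.
have -> : lift ord0 (lift ord0 ord0) = i2 :> 'I_3 by apply/val_inj.
by have -> : ord0 = i0 :> 'I_3 by apply/val_inj.
Qed.
Lemma vec_eq (u w : vec R) : u 0 i0 = w 0 i0 -> u 0 i1 = w 0 i1 -> u 0 i2 = w 0 i2 -> u = w.
Proof.
move=> H0 H1 H2; apply/rowP => i.
case: i => [[|[|[|k]]] Hi] //.
- by rewrite (_ : Ordinal Hi = i0) //; apply/val_inj.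
- by rewrite (_ : Ordinal Hi = i1) //; apply/val_inj.
- by rewrite (_ : Ordinal Hi = i2) //; apply/val_inj.
Qed.
Definition cross (u v : vec R) : vec R := locked (\row_(i < 3)
  (if val i == 0%N then u 0 i1 * v 0 i2 - u 0 i2 * v 0 i1
   else if val i == 1%N then u 0 i2 * v 0 i0 - u 0 i0 * v 0 i2
   else u 0 i0 * v 0 i1 - u 0 i1 * v 0 i0)).
Lemma crossE0 u v : (cross u v) 0 i0 = u 0 i1 * v 0 i2 - u 0 i2 * v 0 i1.
Proof. by rewrite /cross -lock mxE. Qed.
Lemma crossE1 u v : (cross u v) 0 i1 = u 0 i2 * v 0 i0 - u 0 i0 * v 0 i2.
Proof. by rewrite /cross -lock mxE. Qed.
Lemma crossE2 u v : (cross u v) 0 i2 = u 0 i0 * v 0 i1 - u 0 i1 * v 0 i0.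
Proof. by rewrite /cross -lock mxE. Qed.
Ltac vsimp := rewrite /sqnorm ?dotvE;
  repeat (rewrite crossE0 || rewrite crossE1 || rewrite crossE2 || rewrite mxE).
Ltac veq := apply: vec_eq; vsimp.
Implicit Types (u v w b m d x : vec R).

Lemma dotvC u v : dotv u v = dotv v u. Proof. vsimp; ring. Qed.
Lemma dotvDr u v w : dotv u (v + w) = dotv u v + dotv u w. Proof. vsimp; ring. Qed.
Lemma dotvBr u v w : dotv u (v - w) = dotv u v - dotv u w. Proof. vsimp; ring. Qed.
Lemma dotvZr u v (k : R) : dotv u (k *: v) = k * dotv u v. Proof. vsimp; ring. Qed.
Lemma span3 u v (y : vec R) : sqnorm (cross u v) *: y = dotv y u *: cross v (cross u v)
   + dotv y v *: cross (cross u v) u + dotv y (cross u v) *: cross u v.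
Proof. veq; ring. Qed.
Lemma lagrange u v : sqnorm (cross u v) = sqnorm u * sqnorm v - dotv u v ^+ 2.
Proof. vsimp; ring. Qed.
Lemma dcl u v : dotv u (cross u v) = 0. Proof. vsimp; ring. Qed.
Lemma dcr u v : dotv v (cross u v) = 0. Proof. vsimp; ring. Qed.
Lemma ccl b m : cross (cross b m) b = sqnorm b *: m - dotv m b *: b.
Proof. veq; ring. Qed.
Lemma cc2 w d : cross w (cross d w) = sqnorm w *: d - dotv w d *: w.
Proof. veq; ring. Qed.
Lemma trip1 (w1 w2 : vec R) : dotv w1 (cross w2 (cross w1 w2)) = sqnorm (cross w1 w2).
Proof. vsimp; ring. Qed.
Lemma trip2 (w1 w2 : vec R) : dotv w2 (cross (cross w1 w2) w1) = sqnorm (cross w1 w2).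
Proof. vsimp; ring. Qed.
Lemma trip3 (w1 w2 : vec R) : dotv w1 (cross (cross w1 w2) w1) = 0.
Proof. vsimp; ring. Qed.
Lemma trip4 (w1 w2 : vec R) : dotv w2 (cross w2 (cross w1 w2)) = 0.
Proof. vsimp; ring. Qed.
Lemma sqnorm_ge0 x : 0 <= sqnorm x.
Proof. vsimp; nra. Qed.
Lemma sqnorm_eq0 x : sqnorm x = 0 -> x = 0.
Proof. vsimp => H; veq; nra. Qed.
Lemma sqnorm_gt0 x : x != 0 -> 0 < sqnorm x.
Proof.
move=> Hx; rewrite lt_neqAle sqnorm_ge0 andbT eq_sym; apply/eqP => /sqnorm_eq0 H.
by rewrite H eqxx in Hx.
Qed.
Definition coef := (R * vec R * R)%type.
Definition Pv (t : coef) (y : ext R) : R :=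
  match y with Fin x => t.1.1 * sqnorm x + dotv t.1.2 x + t.2 | Infty => t.1.1 end.
Definition Bf (t t' : coef) : R := dotv t.1.2 t'.1.2 - 2 * (t.1.1 * t'.2 + t'.1.1 * t.2).
Definition Good (g : ext R -> ext R) :=
  (forall z, exists y, g y = z) /\ exists (M : coef -> coef) (k : R), 0 < k /\
   (forall t y, Pv t y = 0 <-> Pv (M t) (g y) = 0) /\
   (forall t t', Bf (M t) (M t') = k * Bf t t').

Lemma good_id : Good id.
Proof.
split; first by move=> z; exists z.
exists id, 1; split => //; split => // t t'; by rewrite mul1r.
Qed.

Lemma good_comp f g : Good f -> Good g -> Good (g \o f).
Proof.
move=> [sf [Mf [kf [kf0 [Pf Bff]]]]] [sg [Mg [kg [kg0 [Pg Bg]]]]]; split.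
  move=> z; have [y <-] := sg z; have [x <-] := sf y; by exists x.
exists (Mg \o Mf), (kg * kf); split; first exact: mulr_gt0.
split => [t y|t t'] /=; first by rewrite Pf Pg.
by rewrite Bg Bff mulrA.
Qed.

Lemma good_transl e : Good (ext_transl e).
Proof.
split.
  case=> [x|]; last by exists (Infty R).
  by exists (Fin (x - e)); rewrite /= subrK.
exists (fun t => (t.1.1, t.1.2 - (2 * t.1.1) *: e, t.1.1 * sqnorm e - dotv t.1.2 e + t.2)), 1.
split => //; split => [[[al w] ga] y|[[al w] ga] [[al' w'] ga']] /=.
  suff -> : Pv (al, w - (2 * al) *: e, al * sqnorm e - dotv w e + ga) (ext_transl e y) = Pv (al, w, ga) y by [].
  case: y => [x|] //=; vsimp; ring.
rewrite /Bf /=; vsimp; ring.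
Qed.

Definition inv0 (r2 : R) (y : ext R) : ext R :=
  match y with Fin x => if x == 0 then Infty R else Fin ((r2 / sqnorm x) *: x)
  | Infty => Fin 0 end.

Lemma sqnormZ (k : R) x : sqnorm (k *: x) = k ^+ 2 * sqnorm x.
Proof. vsimp; ring. Qed.

Lemma dotv0 w : dotv w 0 = 0.
Proof. vsimp; ring. Qed.

Lemma inv0K (r2 : R) : r2 != 0 -> forall y, inv0 r2 (inv0 r2 y) = y.
Proof.
move=> Hr; case=> [x|] /=; last by rewrite eqxx.
case: (boolP (x == 0)) => [/eqP -> //| Hx].
have Hs : sqnorm x != 0 by rewrite gt_eqF // sqnorm_gt0.
have Hk : r2 / sqnorm x != 0 by rewrite mulf_neq0 // invr_eq0.
rewrite /inv0 scaler_eq0 (negbTE Hk) (negbTE Hx) /=.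
congr Fin; rewrite scalerA sqnormZ.
have -> : r2 / ((r2 / sqnorm x) ^+ 2 * sqnorm x) * (r2 / sqnorm x) = 1.
  by field; rewrite Hr Hs.
by rewrite scale1r.
Qed.

Lemma good_inv0 (r2 : R) : 0 < r2 -> Good (inv0 r2).
Proof.
move=> Hr; have Hr0 : r2 != 0 by rewrite gt_eqF.
split; first by move=> z; exists (inv0 r2 z); rewrite inv0K.
exists (fun t => (t.2, r2 *: t.1.2, t.1.1 * r2 ^+ 2)), (r2 ^+ 2).
split; first by rewrite exprn_gt0.
split => [[[al w] ga] [x|]|[[al w] ga] [[al' w'] ga']] /=; last first.
- rewrite /Bf /=; vsimp; ring.
- have -> : ga * sqnorm 0 + dotv (r2 *: w) 0 + al * r2 ^+ 2 = al * r2 ^+ 2 by vsimp; ring.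
  by split => [->|/eqP]; [rewrite mul0r | rewrite mulf_eq0 expf_eq0 (negbTE Hr0) andbF orbF => /eqP].
case: (boolP (x == 0)) => [/eqP ->|Hx] /=.
  by have -> : al * sqnorm 0 + dotv w 0 + ga = ga by vsimp; ring.
have Hs : sqnorm x != 0 by rewrite gt_eqF // sqnorm_gt0.
have -> : ga * sqnorm ((r2 / sqnorm x) *: x) + dotv (r2 *: w) ((r2 / sqnorm x) *: x) + al * r2 ^+ 2
  = r2 ^+ 2 / sqnorm x * (al * sqnorm x + dotv w x + ga).
  rewrite sqnormZ dotvZr dotvC dotvZr dotvC; field; exact: Hs.
split => [->|/eqP]; first by rewrite mulr0.
rewrite mulf_eq0 mulf_eq0 invr_eq0 (negbTE Hs) expf_eq0 (negbTE Hr0) andbF /= => /eqP //.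
Qed.
Definition plM (a : vec R) (d0 : R) (t : coef) : coef :=
  let k := 2 / sqnorm a in let e := (k * d0) *: a in
  (t.1.1, (t.1.2 - (k * dotv a t.1.2) *: a) - (2 * t.1.1) *: e,
   t.1.1 * sqnorm e + dotv t.1.2 e + t.2).

Lemma good_plane a (d0 : R) : a != 0 -> Good (gsphere_refl (GPln a d0)).
Proof.
move=> Ha0; have Ha : sqnorm a != 0 by rewrite gt_eqF // sqnorm_gt0.
have HaE := Ha; rewrite /sqnorm dotvE in HaE.
have invo : forall y, gsphere_refl (GPln a d0) (gsphere_refl (GPln a d0) y) = y.
  case=> [x|] //=; congr Fin; veq; field; exact: HaE.
split; first by move=> z; exists (gsphere_refl (GPln a d0) z); rewrite invo.
exists (plM a d0), 1; split => //; split => [t y|[[al w] ga] [[al' w'] ga']].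
  suff -> : Pv (plM a d0 t) (gsphere_refl (GPln a d0) y) = Pv t y by [].
  case: t => [[al w] ga]; case: y => [x|] //=; vsimp; field; exact: HaE.
rewrite /Bf /= mul1r; vsimp; field; exact: HaE.
Qed.

Definition inv_sph (c : vec R) (r2 : R) := ext_transl c \o inv0 r2 \o ext_transl (- c).

Lemma sph_decomp c (r2 : R) : gsphere_refl (GSph c r2) = inv_sph c r2.
Proof.
apply: funext; case=> [x|]; rewrite /inv_sph /=; last by rewrite add0r.
rewrite subr_eq0; case: (x == c) => //=; by rewrite addrC.
Qed.

Lemma mobius_good f : mobius f -> Good f.
Proof.
elim=> [|S g HS _ IH]; first exact: good_id.
apply: good_comp => //; case: S HS => [c r2|a d0] /= HS; last by apply: good_plane; apply/eqP.
rewrite sph_decomp /inv_sph; apply: good_comp; first exact: good_transl.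
apply: good_comp; [exact: good_inv0 | exact: good_transl].
Qed.
Definition posdef (s1 s2 : coef) := 0 < Bf s1 s1 /\ 0 < Bf s1 s1 * Bf s2 s2 - Bf s1 s2 ^+ 2.

Lemma exists_noncol d : d != 0 -> exists u, cross d u != 0.
Proof.
move=> Hd.
pose e0 : vec R := \row_(i < 3) (if val i == 0%N then 1 else 0).
pose e1 : vec R := \row_(i < 3) (if val i == 1%N then 1 else 0).
case: (boolP (cross d e0 == 0)) => H0; last by exists e0.
case: (boolP (cross d e1 == 0)) => H1; last by exists e1.
move: Hd => /eqP; case; apply: vec_eq.
- have := congr1 (fun v : vec R => v 0 i2) (eqP H1); rewrite crossE2 !mxE /=.
  move=> H; lra.
- have := congr1 (fun v : vec R => v 0 i2) (eqP H0); rewrite crossE2 !mxE /=.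
  move=> H; lra.
- have := congr1 (fun v : vec R => v 0 i1) (eqP H0); rewrite crossE1 !mxE /=.
  move=> H; lra.
Qed.

Lemma Pv_lin w (p x : vec R) : Pv (0, w, - dotv w p) (Fin x) = dotv w (x - p).
Proof. rewrite /=; vsimp; ring. Qed.

Lemma circle_rep c : is_circle c ->
  exists s1 s2, posdef s1 s2 /\ forall y, c y <-> Pv s1 y = 0 /\ Pv s2 y = 0.
Proof.
case=> [[p [n [r2 [Hn [Hr ->]]]]]|[p [d [Hd ->]]]].
  exists (0, n, - dotv p n), (1, (-2) *: p, sqnorm p - r2).
  have Hn' : 0 < sqnorm n by apply: sqnorm_gt0; apply/eqP.
  split.
    rewrite /posdef.
    have -> : Bf (0, n, - dotv p n) (0, n, - dotv p n) = sqnorm n by rewrite /Bf /=; vsimp; ring.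
    have -> : sqnorm n * Bf (1, (-2) *: p, sqnorm p - r2) (1, (-2) *: p, sqnorm p - r2)
      - Bf (0, n, - dotv p n) (1, (-2) *: p, sqnorm p - r2) ^+ 2 = sqnorm n * (4 * r2).
      by rewrite /Bf /=; vsimp; ring.
    by split => //; apply: mulr_gt0 => //; apply: mulr_gt0.
  case=> [x|].
    have E3 : Pv (0, n, - dotv p n) (Fin x) = dotv (x - p) n by rewrite /=; vsimp; ring.
    have E4 : Pv (1, (-2) *: p, sqnorm p - r2) (Fin x) = sqnorm (x - p) - r2
      by rewrite /=; vsimp; ring.
    rewrite E3 E4; split.
      by case=> x' [[<-] [-> ->]]; rewrite subrr.
    by case=> H1 /eqP; rewrite subr_eq0 => /eqP H2; exists x.
  split; first by case=> ? [].
  by case=> _ /eqP; rewrite /= oner_eq0.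
have Hd0 : d != 0 by apply/eqP.
have [u Hu] := exists_noncol _ Hd0.
set w1 := cross d u; set w2 := cross d w1.
have Hw1d : dotv w1 d = 0 by rewrite dotvC dcl.
have Hw12 : dotv w1 w2 = 0 by rewrite dcr.
have Hw2d : dotv w2 d = 0 by rewrite dotvC dcl.
have Hm : cross w1 w2 = sqnorm w1 *: d by rewrite /w2 cc2 Hw1d scale0r subr0.
have Hw1 : 0 < sqnorm w1 by apply: sqnorm_gt0.
have Hd' : 0 < sqnorm d by apply: sqnorm_gt0; apply/eqP.
have Hmpos : 0 < sqnorm (cross w1 w2).
  by rewrite Hm sqnormZ; apply: mulr_gt0 => //; apply: exprn_gt0.
exists (0, w1, - dotv w1 p), (0, w2, - dotv w2 p); split.
  rewrite /posdef.
  have -> : Bf (0, w1, - dotv w1 p) (0, w1, - dotv w1 p) = sqnorm w1 by rewrite /Bf /=; vsimp; ring.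
  split => //.
  suff -> : sqnorm w1 * Bf (0, w2, - dotv w2 p) (0, w2, - dotv w2 p)
      - Bf (0, w1, - dotv w1 p) (0, w2, - dotv w2 p) ^+ 2 = sqnorm (cross w1 w2) by [].
  rewrite lagrange /Bf /= /sqnorm; ring.
case=> [x|]; last first.
  by split => _; rewrite /=; [split | left].
rewrite (Pv_lin w1 p x) (Pv_lin w2 p x); split.
  case=> [//|[t [->]]].
  by rewrite addrAC subrr add0r !dotvZr Hw1d Hw2d mulr0.
case=> H1 H2; right.
have S := span3 w1 w2 (x - p).
rewrite (dotvC (x - p) w1) H1 (dotvC (x - p) w2) H2 !scale0r !add0r in S.
set t := dotv (x - p) (cross w1 w2) / sqnorm (cross w1 w2) * sqnorm w1.
exists t; congr Fin.
have E : x - p = (sqnorm (cross w1 w2))^-1 *: (sqnorm (cross w1 w2) *: (x - p)).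
  by rewrite scalerA mulVf ?scale1r // gt_eqF.
have Ey : x - p = t *: d.
  rewrite E S scalerA [in X in _ *: X]Hm scalerA /t.
  by congr (_ *: _); rewrite [_^-1 * _]mulrC.
by rewrite -Ey addrC subrK.
Qed.
Lemma final_alg (w1 w2 b : vec R) (g1 g2 d : R) : b != 0 -> 0 < sqnorm (cross w1 w2) ->
  (forall x, dotv w1 x + g1 = 0 -> dotv w2 x + g2 = 0 -> dotv b x = d) ->
  exists (a : vec R) (d' : R), a != 0 /\ dotv a b = 0 /\ forall x,
    (dotv w1 x + g1 = 0 /\ dotv w2 x + g2 = 0) <-> (dotv b x = d /\ dotv a x = d').
Proof.
move=> Hb Hm Hline.
have Ht1 := trip1 w1 w2; have Ht2 := trip2 w1 w2; have Ht3 := trip3 w1 w2.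
have Ht4 := trip4 w1 w2; have Hwm1 := dcl w1 w2; have Hwm2 := dcr w1 w2.
have Hspan := span3 w1 w2.
move: (cross w1 w2) Hm Ht1 Ht2 Ht3 Ht4 Hwm1 Hwm2 Hspan => m Hm Ht1 Ht2 Ht3 Ht4 Hwm1 Hwm2 Hspan.
have Hm0 : sqnorm m != 0 by rewrite gt_eqF.
pose x0 := (sqnorm m)^-1 *: ((- g1) *: cross w2 m + (- g2) *: cross m w1).
have Hx01 : dotv w1 x0 + g1 = 0.
  rewrite /x0 dotvZr dotvDr !dotvZr Ht1 Ht3; field; exact: Hm0.
have Hx02 : dotv w2 x0 + g2 = 0.
  rewrite /x0 dotvZr dotvDr !dotvZr Ht2 Ht4; field; exact: Hm0.
have Hbx0 := Hline x0 Hx01 Hx02.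
have Hbm : dotv b m = 0.
  have := Hline (x0 + m); rewrite !dotvDr Hwm1 Hwm2 !addr0 Hbx0 => H.
  have := H Hx01 Hx02; lra.
have Hb' : 0 < sqnorm b by apply: sqnorm_gt0.
have Hsa : 0 < sqnorm (cross b m).
  by rewrite lagrange Hbm expr0n /= subr0; apply: mulr_gt0.
have Hsa0 : sqnorm (cross b m) != 0 by rewrite gt_eqF.
have Hsp2 := span3 b m.
have Hcc := ccl b m.
have Ham := dcr b m.
have Hab : dotv (cross b m) b = 0 by rewrite dotvC dcl.
move: (cross b m) Hsa Hsa0 Hsp2 Hcc Ham Hab => a Hsa Hsa0 Hsp2 Hcc Ham Hab.
exists a, (dotv a x0); split.
  apply/eqP => Ha; move: Hsa; rewrite Ha.
  have -> : sqnorm (0 : vec R) = 0 by vsimp; ring.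
  by rewrite ltxx.
split => // x; split.
  case=> H1 H2; split; first exact: Hline.
  have Hy1 : dotv w1 (x - x0) = 0 by rewrite dotvBr; lra.
  have Hy2 : dotv w2 (x - x0) = 0 by rewrite dotvBr; lra.
  have S := Hspan (x - x0).
  rewrite (dotvC (x - x0) w1) Hy1 (dotvC (x - x0) w2) Hy2 !scale0r !add0r in S.
  have := congr1 (dotv a) S; rewrite !dotvZr (dotvC a m) Ham mulr0 => /eqP.
  rewrite mulf_eq0 (negbTE Hm0) /= dotvBr subr_eq0 => /eqP H; by rewrite H /x0 dotvZr.
case=> Hbx Hax.
have Hyb : dotv b (x - x0) = 0 by rewrite dotvBr Hbx Hbx0 subrr.
have Hya : dotv a (x - x0) = 0 by rewrite dotvBr Hax subrr.
have S := Hsp2 (x - x0).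
rewrite (dotvC (x - x0) b) Hyb (dotvC (x - x0) a) Hya Hcc (dotvC m b) Hbm in S.
rewrite !scale0r subr0 addr0 add0r in S.
split.
  have := congr1 (dotv w1) S; rewrite !dotvZr Hwm1 !mulr0 => /eqP.
  rewrite mulf_eq0 (negbTE Hsa0) /= dotvBr subr_eq0 => /eqP ->; exact: Hx01.
have := congr1 (dotv w2) S; rewrite !dotvZr Hwm2 !mulr0 => /eqP.
rewrite mulf_eq0 (negbTE Hsa0) /= dotvBr subr_eq0 => /eqP ->; exact: Hx02.
Qed.
Lemma plane_fin (a : vec R) (d0 : R) x : ext_plane a d0 (Fin x) <-> dotv a x = d0.
Proof.
split; first by case=> [//|[x' [[<-] ->]]].
by move=> H; right; exists x.
Qed.
End S.
Arguments Pv {R}. Arguments Bf {R}. Arguments cross {R}. Arguments lagrange {R}. Arguments final_alg {R}. Arguments plane_fin {R}.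

Theorem theorem5p8 (R : realType) (tau : ext R -> ext R) (v : ext R)
    (phi : ext R -> ext R) (b : vec R) :
  pure_parabolic tau ->
  tau v = v ->
  mobius phi ->
  phi v = Infty R ->
  b != 0 ->
  (forall y, phi (tau y) = ext_transl b (phi y)) ->
  forall c : set (ext R), is_circle c ->
    ((c v /\ exists h, permuted_pencil phi b h /\ c `<=` h)
     <-> half_turn_bank phi b c).
Proof.
move=> _ _ Hphi Hv Hb _ c Hc.
have [Hsurj [M [k [Hk [HP HB]]]]] := @mobius_good R phi Hphi.
have [s1 [s2 [[Hp1 Hp2] Hcs]]] := @circle_rep R c Hc.
have Hct : forall y, c y <-> Pv (M s1) (phi y) = 0 /\ Pv (M s2) (phi y) = 0.
  move=> y; split.
    by move/Hcs => [/HP H1 /HP H2].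
  by move=> [H1 H2]; apply/Hcs; split; apply/HP.
have Hq1 : 0 < Bf (M s1) (M s1) by rewrite HB; apply: mulr_gt0.
have Hq2 : 0 < Bf (M s1) (M s1) * Bf (M s2) (M s2) - Bf (M s1) (M s2) ^+ 2.
  rewrite !HB.
  have -> : k * Bf s1 s1 * (k * Bf s2 s2) - (k * Bf s1 s2) ^+ 2
    = k ^+ 2 * (Bf s1 s1 * Bf s2 s2 - Bf s1 s2 ^+ 2) by ring.
  by apply: mulr_gt0 => //; apply: exprn_gt0.
move: Hct Hq1 Hq2; case: (M s1) => [[al1 w1] g1]; case: (M s2) => [[al2 w2] g2].
move=> Hct Hq1 Hq2.
split; last first.
  case=> s [t [[d Hs] [[a [d' [Ha [Hab Ht]]]] ->]]].
  split.
    by rewrite Hs Ht /= Hv; split; left.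
  by exists s; split; [exists d | move=> y []].
case=> Hcv [h [[d Hh] Hch]].
have := Hcv; move/Hct; rewrite Hv /= => -[Ha1 Ha2]; subst al1 al2.
have Hm : 0 < sqnorm (cross w1 w2).
  move: Hq2; congr (0 < _); rewrite lagrange /Bf /= /sqnorm; ring.
have Hline : forall x, dotv w1 x + g1 = 0 -> dotv w2 x + g2 = 0 -> dotv b x = d.
  move=> x H1 H2; have [y Hy] := Hsurj (Fin x).
  have : c y by apply/Hct; rewrite Hy /= !mul0r !add0r H1 H2.
  move/Hch; rewrite Hh /preimage /= Hy.
  by move/plane_fin.
have [a [d' [Ha [Hab Hx]]]] := final_alg _ _ _ _ _ _ Hb Hm Hline.
exists (phi @^-1` ext_plane b d), (phi @^-1` ext_plane a d').
split; first by exists d.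
split; first by exists a, d'; split => //; apply/eqP.
apply: funext => y; apply: propext.
suff : c y <-> ext_plane b d (phi y) /\ ext_plane a d' (phi y) by [].
split => [/Hct|H]; [ | apply/Hct; move: H]; case: (phi y) => [x|] /=.
- rewrite !mul0r !add0r => /Hx [H1 H2].
  by split; apply/plane_fin.
- by split; left.
- case=> /plane_fin H1 /plane_fin H2.
  by rewrite !mul0r !add0r; apply/Hx.
- by split.
Qed.
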